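(* Let $O,M^\star,\hat E\in\mathbb R^{n\times T}$, $Z_1,\dots,Z_k\in\mathbb R^{n\times T}$ and $\tau^\star\in\mathbb R^k$ satisfy $O=M^\star+\sum_{i=1}^k\tau^\star_iZ_i+\hat E$, and let $\lambda>0$. Suppose $(\hat M,\hat m,\hat\tau)$ is a minimizer of $$\min_{M\in\mathbb R^{n\times T},\tau\in\mathbb R^k,m\in\mathbb R^n}\ \frac12\Big\|O-M-m\mathbf 1^\top-\sum_{i=1}^k\tau_iZ_i\Big\|_F^2+\lambda\|M\|_\star .$$ Let $\hat M=\hat U\hat\Sigma\hat V^\top$ be the SVD of $\hat M$ and let $\hat{\mathbf T}=\{\hat UA^\top+B\hat V^\top+v\mathbf 1^\top: A,B,v\}$ be the span of the tangent space of $\hat M$ and $\{v\mathbf 1^\top:v\in\mathbb R^n\}$. Then $$D(\hat\tau-\tau^\star)=\Delta^1+\Delta^2+\Delta^3,$$ where $D\in\mathbb R^{k\times k}$ has entries $D_{ij}=\langle P_{\hat{\mathbf T}^\perp}(Z_i),P_{\hat{\mathbf T}^\perp}(Z_j)\rangle$ and $\Delta^1,\Delta^2,\Delta^3\in\mathbb R^k$ have components $\Delta^1_i=\lambda\langle Z_i,\hat U\hat V^\top\rangle$, $\Delta^2_i=\langle Z_i,P_{\hat{\mathbf T}^\perp}(\hat E)\rangle$, $\Delta^3_i=\langle Z_i,P_{\hat{\mathbf T}^\perp}(M^\star)\rangle$.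
   Context: $\|\cdot\|_F$ is the Frobenius norm, $\|\cdot\|_\star$ the nuclear norm, $\langle\cdot,\cdot\rangle$ the Frobenius inner product, $\mathbf 1$ the all-ones vector in $\mathbb R^T$, and $P_{\hat{\mathbf T}^\perp}$ the orthogonal projection onto the orthogonal complement of $\hat{\mathbf T}$. The SVD is the compact SVD ($\hat U,\hat V$ with orthonormal columns, $\hat\Sigma$ diagonal positive). *)

(* Defs.v *)
From HB Require Import structures.
From mathcomp Require Import all_boot all_order all_algebra.
From mathcomp Require Import boolp classical_sets reals.
Set Implicit Arguments. Unset Strict Implicit. Unset Printing Implicit Defensive.
Import Order.TTheory GRing.Theory Num.Theory.
Local Open Scope ring_scope.
Local Open Scope classical_set_scope.

Section Defs.
Variable R : realType.

Definition frobi {n T : nat} (A B : 'M[R]_(n, T)) : R :=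
  \sum_(i < n) \sum_(j < T) A i j * B i j.

Definition frob {n T : nat} (A : 'M[R]_(n, T)) : R := Num.sqrt (frobi A A).

Definition onesT (T : nat) : 'rV[R]_T := const_mx 1.

Definition is_csvd {n T r : nat} (M : 'M[R]_(n, T)) (U : 'M[R]_(n, r))
    (s : 'rV[R]_r) (V : 'M[R]_(T, r)) : Prop :=
  [/\ U^T *m U = 1%:M, V^T *m V = 1%:M, (forall j, 0 < s 0 j)
    & M = U *m diag_mx s *m V^T].

Definition nucnorm {n T : nat} (M : 'M[R]_(n, T)) : R :=
  sup [set x : R | exists r (U : 'M[R]_(n, r)) (s : 'rV[R]_r) (V : 'M[R]_(T, r)),
          is_csvd M U s V /\ x = \sum_(j < r) s 0 j].

Definition tangentT {n T r : nat} (U : 'M[R]_(n, r)) (V : 'M[R]_(T, r))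
  : set 'M[R]_(n, T) :=
  [set X | exists (A : 'M[R]_(T, r)) (B : 'M[R]_(n, r)) (v : 'cV[R]_n),
      X = U *m A^T + B *m V^T + v *m onesT T].

Definition proj_perp {n T : nat} (S : set 'M[R]_(n, T)) (X : 'M[R]_(n, T))
  : 'M[R]_(n, T) :=
  xget 0 [set Y | S (X - Y) /\ (forall W, S W -> frobi Y W = 0)].

Definition objective {n T k : nat} (O : 'M[R]_(n, T)) (Z : 'I_k -> 'M[R]_(n, T))
    (lambda : R) (M : 'M[R]_(n, T)) (m : 'cV[R]_n) (tau : 'cV[R]_k) : R :=
  2^-1 * frob (O - M - m *m onesT T - \sum_(i < k) tau i 0 *: Z i) ^+ 2
  + lambda * nucnorm M.

End Defs.

(* Main.v *)
Require Import Defs.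
From HB Require Import structures.
From mathcomp Require Import all_boot all_order all_algebra.
From mathcomp Require Import boolp classical_sets reals.
From mathcomp Require Import ring lra.
Import Order.TTheory GRing.Theory Num.Theory.
Local Open Scope ring_scope.
Set Implicit Arguments. Unset Strict Implicit.

Section Aux.
Variable R : realType.

Lemma frobiE n T (A B : 'M[R]_(n,T)) : frobi A B = \tr (A *m B^T).
Proof.
rewrite /frobi /mxtrace; apply: eq_bigr => i _; rewrite !mxE.
by apply: eq_bigr => j _; rewrite !mxE.
Qed.

Lemma frobiC n T (A B : 'M[R]_(n,T)) : frobi A B = frobi B A.
Proof. by rewrite /frobi; apply: eq_bigr => i _; apply: eq_bigr => j _; rewrite mulrC. Qed.

Lemma frobiDl n T (A B C : 'M[R]_(n,T)) : frobi (A + B) C = frobi A C + frobi B C.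
Proof.
rewrite /frobi -big_split; apply: eq_bigr => i _; rewrite -big_split.
by apply: eq_bigr => j _; rewrite mxE mulrDl.
Qed.

Lemma frobiZl n T a (A C : 'M[R]_(n,T)) : frobi (a *: A) C = a * frobi A C.
Proof.
rewrite /frobi mulr_sumr; apply: eq_bigr => i _; rewrite mulr_sumr.
by apply: eq_bigr => j _; rewrite mxE mulrA.
Qed.

Lemma frobiNl n T (A C : 'M[R]_(n,T)) : frobi (- A) C = - frobi A C.
Proof. by rewrite -scaleN1r frobiZl mulN1r. Qed.

Lemma frobiBl n T (A B C : 'M[R]_(n,T)) : frobi (A - B) C = frobi A C - frobi B C.
Proof. by rewrite frobiDl frobiNl. Qed.

Lemma frobiDr n T (A B C : 'M[R]_(n,T)) : frobi C (A + B) = frobi C A + frobi C B.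
Proof. by rewrite !(frobiC C) frobiDl. Qed.
Lemma frobiZr n T a (A C : 'M[R]_(n,T)) : frobi C (a *: A) = a * frobi C A.
Proof. by rewrite !(frobiC C) frobiZl. Qed.
Lemma frobiNr n T (A C : 'M[R]_(n,T)) : frobi C (- A) = - frobi C A.
Proof. by rewrite !(frobiC C) frobiNl. Qed.
Lemma frobiBr n T (A B C : 'M[R]_(n,T)) : frobi C (A - B) = frobi C A - frobi C B.
Proof. by rewrite !(frobiC C) frobiBl. Qed.
Lemma frobi0r n T (C : 'M[R]_(n,T)) : frobi C 0 = 0.
Proof. by rewrite /frobi big1 // => i _; rewrite big1 // => j _; rewrite mxE mulr0. Qed.
Lemma frobi0l n T (C : 'M[R]_(n,T)) : frobi 0 C = 0.
Proof. by rewrite frobiC frobi0r. Qed.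

Lemma frobi_ge0 n T (A : 'M[R]_(n,T)) : 0 <= frobi A A.
Proof. by apply: sumr_ge0 => i _; apply: sumr_ge0 => j _; rewrite -expr2 sqr_ge0. Qed.

Lemma frobi_eq0 n T (A : 'M[R]_(n,T)) : frobi A A = 0 -> A = 0.
Proof.
move=> h; apply/matrixP => i j; rewrite mxE.
have h2 : \sum_j A i j * A i j = 0.
  by apply: (psumr_eq0P _ h) => // k _; apply: sumr_ge0 => l _; rewrite -expr2 sqr_ge0.
have h3 : A i j * A i j = 0.
  by apply: (psumr_eq0P _ h2) => // l _; rewrite -expr2 sqr_ge0.
by move/eqP: h3; rewrite mulf_eq0 orbb => /eqP.
Qed.

Lemma frobi_mull n m T (U : 'M[R]_(n,m)) (A : 'M[R]_(m,T)) B :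
  frobi (U *m A) B = frobi A (U^T *m B).
Proof. by rewrite !frobiE -mulmxA mxtrace_mulC trmx_mul trmxK mulmxA. Qed.

Lemma frobi_mulr n m T (A : 'M[R]_(n,m)) (V : 'M[R]_(m,T)) B :
  frobi (A *m V) B = frobi A (B *m V^T).
Proof. by rewrite !frobiE trmx_mul trmxK mulmxA. Qed.

Lemma frobi_tr n T (A B : 'M[R]_(n,T)) : frobi A^T B^T = frobi A B.
Proof. by rewrite /frobi exchange_big; apply: eq_bigr => i _; apply: eq_bigr => j _; rewrite !mxE. Qed.


Lemma quad0 (a b : R) : (forall t : R, 0 <= t * a + t ^+ 2 * b) -> a = 0.
Proof.
move=> H; apply/eqP; apply/negPn/negP => a0.
set c := `|b| + 1.
have c0 : 0 < c by rewrite /c ltr_pwDr.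
have e : c ^+ 2 * ((- a / c) * a + (- a / c) ^+ 2 * b) = a ^+ 2 * (b - c).
  by field; rewrite gt_eqF.
have h1 := H (- a / c).
have h2 : 0 <= a ^+ 2 * (b - c) by rewrite -e mulr_ge0 // exprn_ge0 // ltW.
have h3 : b - c <= -1 by rewrite /c; have := ler_norm b; lra.
have h4 : 0 < a ^+ 2 by rewrite exprn_even_gt0.
nra.
Qed.

Lemma frobi_sq n T (A X : 'M[R]_(n,T)) t :
  frobi (A - t *: X) (A - t *: X) = frobi A A - 2 * t * frobi A X + t ^+ 2 * frobi X X.
Proof.
rewrite !frobiBl !frobiBr !frobiZl !frobiZr (frobiC X A); ring.
Qed.

Lemma core n T (A X : 'M[R]_(n,T)) (lam b0 c d : R) :
  (forall t, 2^-1 * frobi A A + lam * b0 <=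
     2^-1 * frobi (A - t *: X) (A - t *: X) + lam * (b0 + t * c + t ^+ 2 * d)) ->
  frobi A X = lam * c.
Proof.
move=> H.
suff : lam * c - frobi A X = 0 by lra.
apply: (@quad0 _ (2^-1 * frobi X X + lam * d)) => t.
have := H t; rewrite frobi_sq.
lra.
Qed.

Lemma bessel n p T (U : 'M[R]_(n,p)) (P : 'M[R]_(n,T)) :
  U^T *m U = 1%:M -> frobi (U^T *m P) (U^T *m P) <= frobi P P.
Proof.
move=> hU; set W := U^T *m P; set D := P - U *m W.
have UD : U^T *m D = 0 by rewrite /D mulmxBr mulmxA hU mul1mx subrr.
have eP : P = D + U *m W by rewrite /D subrK.
clearbody D W.
rewrite eP !frobiDl !frobiDr (frobiC (U *m W) D) !frobi_mull (frobiC D) frobi_mull UD.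
rewrite mulmxA hU mul1mx frobi0r; have := frobi_ge0 D; lra.
Qed.

Lemma cs2 n T (A B : 'M[R]_(n,T)) : 2 * frobi A B <= frobi A A + frobi B B.
Proof. have := frobi_ge0 (A - B); rewrite !frobiBl !frobiBr (frobiC B A); lra. Qed.

Lemma csvd_sum_le n T p r (P : 'M[R]_(n,p)) (Q : 'M[R]_(T,p)) U s V :
  @is_csvd R n T r (P *m Q^T) U s V -> \sum_j s 0 j <= (frobi P P + frobi Q Q) / 2.
Proof.
case=> hU hV hs hM.
have e : \sum_j s 0 j = frobi (U^T *m P) (V^T *m Q).
  have e1 : \sum_j s 0 j = frobi (diag_mx s) 1%:M.
    by rewrite frobiE trmx1 mulmx1 mxtrace_diag.
  have e2 : frobi (diag_mx s) (V^T *m V) = frobi (diag_mx s *m V^T) V^T.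
    by rewrite frobi_mulr trmxK.
  rewrite e1 -hV e2.
  have -> : diag_mx s *m V^T = U^T *m P *m Q^T.
    by rewrite -mulmxA hM !mulmxA hU mul1mx.
  by rewrite frobi_mulr trmxK.
rewrite e; have := cs2 (U^T *m P) (V^T *m Q); have := bessel P hU; have := bessel Q hV.
lra.
Qed.

Lemma nuc_le n T p (P : 'M[R]_(n,p)) (Q : 'M[R]_(T,p)) :
  nucnorm (P *m Q^T) <= (frobi P P + frobi Q Q) / 2.
Proof.
rewrite /nucnorm; set E := (X in sup X <= _).
case: (pselect (E !=set0)%classic) => [ne|e0].
  apply: ge_sup => // x [r' [U' [s' [V' [hc ->]]]]].
  exact: csvd_sum_le hc.
have -> : E = set0.
  by apply/seteqP; split=> x // Ex; exfalso; apply: e0; exists x.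
rewrite sup0; have := frobi_ge0 P; have := frobi_ge0 Q; lra.
Qed.

Lemma nuc_ge n T r (M : 'M[R]_(n,T)) U s V :
  @is_csvd R n T r M U s V -> \sum_j s 0 j <= nucnorm M.
Proof.
move=> hc; rewrite /nucnorm; apply: sup_upper_bound; last by exists r, U, s, V.
split; first by exists (\sum_j s 0 j); exists r, U, s, V.
exists ((frobi (U *m diag_mx s) (U *m diag_mx s) + frobi V V) / 2).
move=> x [r' [U' [s' [V' [hc' ->]]]]].
apply: csvd_sum_le; case: hc => _ _ _ hM; rewrite -hM; exact: hc'.
Qed.

Lemma frobi_sumr n T k (A : 'M[R]_(n,T)) (c : 'I_k -> R) (F : 'I_k -> 'M[R]_(n,T)) :
  frobi A (\sum_(j < k) c j *: F j) = \sum_(j < k) c j * frobi A (F j).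
Proof.
rewrite (big_morph (frobi A) (fun x y => frobiDr x y A) (frobi0r A)).
by apply: eq_bigr => j _; rewrite frobiZr.
Qed.

End Aux.
Section Aux2.
Variable R : realType.

Lemma objE n T k (O : 'M[R]_(n,T)) (Z : 'I_k -> 'M[R]_(n,T)) lam M m tau :
  objective O Z lam M m tau =
  2^-1 * frobi (O - M - m *m onesT R T - \sum_(i < k) tau i 0 *: Z i)
               (O - M - m *m onesT R T - \sum_(i < k) tau i 0 *: Z i)
  + lam * nucnorm M.
Proof. by rewrite /objective /frob sqr_sqrtr // frobi_ge0. Qed.

Lemma frobi_ones T : onesT R T *m (onesT R T)^T = (T%:R)%:M.
Proof.
apply/matrixP => i j; rewrite (ord1 i) (ord1 j) !mxE /=.
under eq_bigr => l _ do rewrite !mxE mulr1.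
by rewrite sumr_const card_ord.
Qed.

Lemma cancel_diag n r (X : 'M[R]_(n,r)) (s : 'rV[R]_r) :
  (forall j, 0 < s 0 j) -> X *m diag_mx (\row_j Num.sqrt (s 0 j)) = 0 -> X = 0.
Proof.
move=> hs h; apply/matrixP => i j.
have := congr1 (fun M : 'M[R]_(n,r) => M i j) h; rewrite mul_mx_diag !mxE => /eqP.
rewrite mulf_eq0 => /orP [/eqP //|]; rewrite sqrtr_eq0 => h2.
by have := hs j; rewrite ltNge h2.
Qed.

Lemma diag_sq r (s : 'rV[R]_r) : (forall j, 0 < s 0 j) ->
  diag_mx (\row_j Num.sqrt (s 0 j)) *m diag_mx (\row_j Num.sqrt (s 0 j)) = diag_mx s.
Proof.
move=> hs; rewrite mul_diag_mx; apply/matrixP => i j; rewrite !mxE.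
case: (i =P j) => [->|_]; last by rewrite !mulr0n mulr0.
by rewrite !mulr1n -expr2 sqr_sqrtr // ltW.
Qed.

End Aux2.

Lemma zh (V : zmodType) (x a b : V) : x - (x - a - b) = b + a.
Proof. by rewrite opprB opprB addrC -addrA subrK. Qed.

Section Proj.
Variable R : realType.

Lemma proj_exists n T r (U : 'M[R]_(n,r)) (V : 'M[R]_(T,r)) (X : 'M[R]_(n,T)) :
  U^T *m U = 1%:M -> V^T *m V = 1%:M -> V^T *m (onesT R T)^T = 0 ->
  exists Y, tangentT U V (X - Y) /\ (forall W, tangentT U V W -> frobi Y W = 0).
Proof.
move=> hU hV hVo.
set o := (onesT R T)^T.
set Q := V *m V^T + T%:R^-1 *: (o *m onesT R T).
set Pu := U *m U^T.
have UtPu : U^T *m (1%:M - Pu) = 0.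
  by rewrite mulmxBr mulmx1 /Pu mulmxA hU mul1mx subrr.
have oV : onesT R T *m V = 0.
  by have := congr1 trmx hVo; rewrite trmx_mul !trmxK trmx0.
have QV : (1%:M - Q) *m V = 0.
  rewrite mulmxBl mul1mx /Q mulmxDl -!mulmxA hV mulmx1 -scalemxAl -mulmxA oV.
  by rewrite mulmx0 scaler0 addr0 subrr.
have Qo : (1%:M - Q) *m o = 0.
  case: (posnP T) => [T0|Tp].
    apply/matrixP => i j; have h : (nat_of_ord i < 0)%N by rewrite -[X in (_ < X)%N]T0 ltn_ord.
    by [].
  rewrite mulmxBl mul1mx /Q mulmxDl -!mulmxA hVo mulmx0 add0r -scalemxAl -mulmxA.
  rewrite /o frobi_ones mul_mx_scalar scalerA mulVf ?scale1r ?subrr //.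
  by rewrite pnatr_eq0 -lt0n.
exists ((1%:M - Pu) *m X *m (1%:M - Q)); split.
  exists ((U^T *m X *m (1%:M - Q))^T), (X *m V), (T%:R^-1 *: (X *m o)).
  rewrite trmxK.
  have e1 : (1%:M - Pu) *m X *m (1%:M - Q) = X *m (1%:M - Q) - U *m (U^T *m X *m (1%:M - Q)).
    by rewrite mulmxBl mul1mx mulmxBl /Pu !mulmxA.
  have e2 : X *m (1%:M - Q) = X - (X *m V *m V^T + T%:R^-1 *: (X *m o) *m onesT R T).
    by rewrite mulmxBr mulmx1 /Q mulmxDr scalemxAr !mulmxA -scalemxAr scalemxAl.
  by rewrite e1 e2 zh addrA.
move=> W [A [B [v ->]]].
rewrite !frobiDr.
have h1 : frobi ((1%:M - Pu) *m X *m (1%:M - Q)) (U *m A^T) = 0.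
  by rewrite frobiC frobi_mull !mulmxA UtPu !mul0mx frobi0r.
have h2 : frobi ((1%:M - Pu) *m X *m (1%:M - Q)) (B *m V^T) = 0.
  by rewrite -frobi_mulr -[_ *m V]mulmxA QV mulmx0 frobi0l.
have h3 : frobi ((1%:M - Pu) *m X *m (1%:M - Q)) (v *m onesT R T) = 0.
  by rewrite -[onesT R T]trmxK -frobi_mulr -[_ *m o]mulmxA Qo mulmx0 frobi0l.
by rewrite h1 h2 h3 !addr0.
Qed.
End Proj.

Unset Implicit Arguments. Set Strict Implicit.

Theorem lemma1 (R : realType) (n T k : nat)
    (O Mstar Ehat : 'M[R]_(n, T)) (Z : 'I_k -> 'M[R]_(n, T))
    (taustar : 'cV[R]_k) (lambda : R)
    (Mhat : 'M[R]_(n, T)) (mhat : 'cV[R]_n) (tauhat : 'cV[R]_k)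
    (r : nat) (U : 'M[R]_(n, r)) (s : 'rV[R]_r) (V : 'M[R]_(T, r)) :
  O = Mstar + \sum_(i < k) taustar i 0 *: Z i + Ehat ->
  0 < lambda ->
  (forall (M : 'M[R]_(n, T)) (m : 'cV[R]_n) (tau : 'cV[R]_k),
      objective O Z lambda Mhat mhat tauhat <= objective O Z lambda M m tau) ->
  is_csvd Mhat U s V ->
  let P := proj_perp (tangentT U V) in
  let D : 'M[R]_k := \matrix_(i < k, j < k) frobi (P (Z i)) (P (Z j)) in
  D *m (tauhat - taustar) =
    \col_(i < k) (lambda * frobi (Z i) (U *m V^T))
  + \col_(i < k) frobi (Z i) (P Ehat)
  + \col_(i < k) frobi (Z i) (P Mstar).
Proof.
move=> hO hlam hopt hc P D.
case: (hc) => hU hV hs hM.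
set o := (onesT R T)^T.
set Rm := O - Mhat - mhat *m onesT R T - \sum_(i < k) tauhat i 0 *: Z i.
have opt1 : forall i, frobi Rm (Z i) = 0.
  move=> i; rewrite -(mulr0 lambda).
  apply: (@core _ _ _ _ _ lambda (nucnorm Mhat) 0 0) => t.
  have := hopt Mhat mhat (tauhat + t *: delta_mx i 0); rewrite !objE.
  have -> : \sum_(i0 < k) (tauhat + t *: delta_mx i 0) i0 0 *: Z i0
         = \sum_(i0 < k) tauhat i0 0 *: Z i0 + t *: Z i.
    rewrite (eq_bigr (fun j => tauhat j 0 *: Z j + (t * (j == i)%:R) *: Z j)); last first.
      by move=> j _; rewrite !mxE eqxx andbT scalerDl.
    rewrite big_split /=; congr (_ + _).
    rewrite (bigD1 i) //= eqxx mulr1 big1 ?addr0 // => j /negbTE ->.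
    by rewrite mulr0 scale0r.
  by rewrite opprD addrA !mulr0 !addr0 => h; exact: h.
have opt2 : Rm *m o = 0.
  have h : forall w : 'cV[R]_n, frobi Rm (w *m onesT R T) = 0.
    move=> w; rewrite -(mulr0 lambda).
    apply: (@core _ _ _ _ _ lambda (nucnorm Mhat) 0 0) => t.
    have := hopt Mhat (mhat + t *: w) tauhat; rewrite !objE.
    rewrite mulmxDl -scalemxAl opprD addrA.
    by rewrite [_ - t *: _ - _]addrAC !mulr0 !addr0 => h; exact: h.
  apply: frobi_eq0; rewrite frobi_mulr trmxK; exact: h.
set a := \row_j Num.sqrt (s 0 j).
set P0 := U *m diag_mx a.
set Q0 := V *m diag_mx a.
have haa := diag_sq hs; rewrite -/a in haa.
have hMf : Mhat = P0 *m Q0^T.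
  by rewrite /P0 /Q0 trmx_mul tr_diag_mx mulmxA -(mulmxA U) haa hM.
have hfr : forall (W : 'M[R]_(_, r)), W^T *m W = 1%:M ->
    frobi (W *m diag_mx a) (W *m diag_mx a) = \sum_j s 0 j.
  move=> m W hW; rewrite frobi_mull mulmxA hW mul1mx.
  have -> : frobi (diag_mx a) (diag_mx a) = frobi (diag_mx a *m diag_mx a) 1%:M.
    by rewrite frobi_mulr mul1mx tr_diag_mx.
  by rewrite haa frobiE trmx1 mulmx1 mxtrace_diag.
have hP0 : frobi P0 P0 = \sum_j s 0 j by exact: hfr.
have hQ0 : frobi Q0 Q0 = \sum_j s 0 j by exact: hfr.
have nlow : \sum_j s 0 j <= nucnorm Mhat := nuc_ge hc.
have pertM : forall (Dl : 'M[R]_(n,T)) c d,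
   (forall t, nucnorm (Mhat + t *: Dl) <= \sum_j s 0 j + t * c + t ^+ 2 * d) ->
   frobi Rm Dl = lambda * c.
  move=> Dl c d hb; apply: (@core _ _ _ _ _ lambda (\sum_j s 0 j) c d) => t.
  have := hopt (Mhat + t *: Dl) mhat tauhat; rewrite !objE.
  have l1 := ler_wpM2l (ltW hlam) nlow.
  have l2 := ler_wpM2l (ltW hlam) (hb t).
  have -> : O - (Mhat + t *: Dl) - mhat *m onesT R T - \sum_(i < k) tauhat i 0 *: Z i
      = Rm - t *: Dl.
    by rewrite opprD addrA (addrAC (O - Mhat)) (addrAC (O - Mhat - _)).

  rewrite -/Rm; lra.
have hPa : forall P1, frobi Rm (P1 *m Q0^T) = lambda * frobi P0 P1.
  move=> P1; apply: (pertM _ _ (2^-1 * frobi P1 P1)) => t.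
  have -> : Mhat + t *: (P1 *m Q0^T) = (P0 + t *: P1) *m Q0^T.
    by rewrite hMf mulmxDl scalemxAl.
  apply: le_trans (nuc_le _ _) _.
  rewrite frobiDl !frobiDr !frobiZl !frobiZr (frobiC P1 P0) hP0 hQ0; lra.
have hQa : forall Q1, frobi Rm (P0 *m Q1^T) = lambda * frobi Q0 Q1.
  move=> Q1; apply: (pertM _ _ (2^-1 * frobi Q1 Q1)) => t.
  have -> : Mhat + t *: (P0 *m Q1^T) = P0 *m (Q0 + t *: Q1)^T.
    by rewrite hMf linearD linearZ /= mulmxDr scalemxAr.
  apply: le_trans (nuc_le _ _) _.
  rewrite frobiDl !frobiDr !frobiZl !frobiZr (frobiC Q1 Q0) hP0 hQ0; lra.
have hRV : Rm *m V = lambda *: U.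
  apply/eqP; rewrite -subr_eq0; apply/eqP; apply: (cancel_diag hs).
  apply: frobi_eq0.
  have -> : (Rm *m V - lambda *: U) *m diag_mx a = Rm *m Q0 - lambda *: P0.
    by rewrite mulmxBl -scalemxAl -mulmxA.
  rewrite frobiBl frobiZl {1}frobi_mulr hPa; ring.
have hRU : Rm^T *m U = lambda *: V.
  apply/eqP; rewrite -subr_eq0; apply/eqP; apply: (cancel_diag hs).
  apply: frobi_eq0.
  have -> : (Rm^T *m U - lambda *: V) *m diag_mx a = Rm^T *m P0 - lambda *: Q0.
    by rewrite mulmxBl -scalemxAl -mulmxA.
  rewrite frobiBl frobiZl -[frobi (Rm^T *m P0) _]frobi_tr trmx_mul trmxK frobi_mull trmxK.
  rewrite hQa; ring.
have hUR : U^T *m Rm = lambda *: V^T.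
  by have := congr1 trmx hRU; rewrite trmx_mul trmxK linearZ.
have hVo : V^T *m o = 0.
  have h : lambda *: (V^T *m o) = 0.
    by rewrite scalemxAl -hUR -mulmxA opt2 mulmx0.
  by move/eqP: h; rewrite scaler_eq0 (gt_eqF hlam) /= => /eqP.
have hPX : forall X, tangentT U V (X - P X) /\ forall W, tangentT U V W -> frobi (P X) W = 0.
  move=> X; rewrite /P /proj_perp; exact: (xgetPex 0 (proj_exists X hU hV hVo)).
have hRperp : forall W, tangentT U V W -> frobi (Rm - lambda *: (U *m V^T)) W = 0.
  move=> W [A [B [v ->]]]; rewrite !frobiDr.
  have t1 : frobi (Rm - lambda *: (U *m V^T)) (U *m A^T) = 0.
    rewrite frobiC frobi_mull mulmxBr -scalemxAr mulmxA hU mul1mx hUR subrr.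
    exact: frobi0r.
  have t2 : frobi (Rm - lambda *: (U *m V^T)) (B *m V^T) = 0.
    rewrite -frobi_mulr mulmxBl -scalemxAl -mulmxA hV mulmx1 hRV subrr.
    exact: frobi0l.
  have t3 : frobi (Rm - lambda *: (U *m V^T)) (v *m onesT R T) = 0.
    rewrite -[onesT R T]trmxK -frobi_mulr mulmxBl opt2 -scalemxAl -mulmxA hVo mulmx0.
    by rewrite scaler0 subrr frobi0l.
  by rewrite t1 t2 t3 !addr0.
have SUV : tangentT U V (U *m V^T).
  by exists V, 0, 0; rewrite !mul0mx !addr0.
have SM : tangentT U V Mhat.
  exists (V *m diag_mx s), 0, 0.
  by rewrite !mul0mx !addr0 trmx_mul tr_diag_mx mulmxA.
have Sm1 : tangentT U V (mhat *m onesT R T).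
  by exists 0, 0, mhat; rewrite trmx0 mulmx0 !mul0mx !add0r.
apply/matrixP => i j; rewrite (ord1 j) !mxE.
under eq_bigr => j0 _ do rewrite !mxE.
have [hWi hpperp] := hPX (Z i).
set p := P (Z i).
have f1 : forall X, frobi p (P X) = frobi p X.
  move=> X; have [hX _] := hPX X; have := hpperp _ hX; rewrite frobiBr; lra.
have f2 : forall X, frobi (Z i) (P X) = frobi p X.
  move=> X; have [_ hXp] := hPX X; have := hXp _ hWi.
  rewrite frobiBr (frobiC (P X)) (frobiC (P X)) f1; lra.
under eq_bigr => j0 _ do rewrite f1 mulrC mulrBl.
rewrite sumrB -!frobi_sumr !f2.
have e1 : frobi p Rm = frobi p O - frobi p Mhat - frobi p (mhat *m onesT R T)
           - frobi p (\sum_(i0 < k) tauhat i0 0 *: Z i0).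
  by rewrite /Rm !frobiBr.
have e2 : frobi p O = frobi p Mstar + frobi p (\sum_(i0 < k) taustar i0 0 *: Z i0)
           + frobi p Ehat.
  by rewrite hO !frobiDr.
clearbody Rm.
have e3 := hpperp _ SM.
have e4 := hpperp _ Sm1.
have e5 := hpperp _ SUV.
have e6 := opt1 i.
have e7 := hRperp _ hWi.
rewrite !frobiBl !frobiBr !frobiZl (frobiC (U *m V^T) (Z i)) (frobiC (U *m V^T) p)
  (frobiC Rm p) in e7.
rewrite -/p in e3 e4 e5.
rewrite e5 mulr0 subr0 e6 sub0r in e7.
have key : frobi p (\sum_(i0 < k) tauhat i0 0 *: Z i0)
   - frobi p (\sum_(i0 < k) taustar i0 0 *: Z i0)
   = lambda * frobi (Z i) (U *m V^T) + frobi p Ehat + frobi p Mstar by lra.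
exact: key.
Qed.
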